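(* Let $\Sigma$ be an alphabet with at least three letters and $n\geq 1$. Let $f,g\colon\mathcal{T}(\Sigma)^n\to\mathcal{T}(\Sigma)$ be congruence preserving functions such that $f(a_1,\ldots,a_n)=g(a_1,\ldots,a_n)$ for all $a_1,\ldots,a_n\in\Sigma$. Then $f(t_1,\ldots,t_n)=g(t_1,\ldots,t_n)$ for all $t_1,\ldots,t_n\in\mathcal{T}(\Sigma)$.
   Context: Let $\Sigma$ be an alphabet not containing $0,1$. A binary tree over $\Sigma$ is a finite set $t \subseteq \{0,1\}^*\Sigma$ such that for any $ua, vb \in t$ with $ua \neq vb$, $u$ is not a prefix of $v$ and $v$ is not a prefix of $u$; $\mathcal{T}(\Sigma)$ is the set of such trees, $\mathbf 0=\emptyset$, each letter $a$ is identified with $\{a\}$, and $t\star t' = 0.t\cup 1.t'$. A congruence is an equivalence relation on $\mathcal{T}(\Sigma)$ compatible with $\star$. A function $f\colon\mathcal{T}(\Sigma)^n\to\mathcal{T}(\Sigma)$ is congruence preserving if for every congruence $\sim$ and all $t_i,t_i'$, $t_i\sim t_i'$ for all $i=1,\ldots,n$ implies $f(t_1,\ldots,t_n)\sim f(t_1',\ldots,t_n')$. *)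

(* Defs.v *)
From HB Require Import structures.
From mathcomp Require Import all_boot finmap.
Set Implicit Arguments. Unset Strict Implicit. Unset Printing Implicit Defensive.
Local Open Scope fset_scope.

Section Trees.
Variable Sigma : finType.

(* A word u a in {0,1}^* Sigma is encoded as the pair (u, a), with
   0 = false and 1 = true. *)
Definition word := (seq bool * Sigma)%type.

Definition is_tree (t : {fset word}) : bool :=
  [forall x : t, forall y : t,
     (val x != val y) ==> ~~ prefix (val x).1 (val y).1].

Record tree := Tree { tset :> {fset word}; tsetP : is_tree tset }.

HB.instance Definition _ := [isSub for tset].
HB.instance Definition _ := [Equality of tree by <:].

Lemma is_tree0 : is_tree fset0.
Proof. by apply/forallP => -[x Hx]; exfalso; rewrite in_fset0 in Hx. Qed.
Definition tree0 : tree := Tree is_tree0.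

Lemma is_tree_letter (a : Sigma) : is_tree [fset ([::], a)].
Proof.
apply/forallP => -[x Hx]; apply/forallP => -[y Hy] /=.
by move: Hx Hy; rewrite !inE => /eqP-> /eqP->; rewrite eqxx.
Qed.
Definition letter (a : Sigma) : tree := Tree (is_tree_letter a).

Definition pref (b : bool) (t : {fset word}) : {fset word} :=
  [fset (b :: w.1, w.2) | w in t].

Lemma is_tree_star (t t' : tree) : is_tree (pref false t `|` pref true t').
Proof.
apply/forallP => -[x Hx]; apply/forallP => -[y Hy] /=; apply/implyP => nxy.
have key : forall (b : bool) (s : tree) (w w' : word), w \in tset s -> w' \in tset s ->
    (b :: w.1, w.2) != (b :: w'.1, w'.2) -> ~~ prefix (b :: w.1) (b :: w'.1).
  move=> b s w w' Hw Hw' ne; rewrite /= eqxx /=.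
  have /forallP/(_ [` Hw])/forallP/(_ [` Hw'])/implyP := tsetP s; apply => /=.
  by apply: contra ne => /eqP ->.
move: Hx Hy nxy; rewrite !inE => /orP[] /imfsetP[w Hw ->] /orP[] /imfsetP[w' Hw' ->] //=;
  by [apply: key Hw Hw' | apply: key Hw Hw'].
Qed.

Definition star (t t' : tree) : tree := Tree (is_tree_star t t').

Definition congruence (R : tree -> tree -> Prop) : Prop :=
  [/\ (forall t, R t t),
      (forall t t', R t t' -> R t' t),
      (forall t t' t'', R t t' -> R t' t'' -> R t t'') &
      (forall t1 t2 t1' t2', R t1 t1' -> R t2 t2' -> R (star t1 t2) (star t1' t2'))].

Definition congruence_preserving (n : nat) (f : ('I_n -> tree) -> tree) : Prop :=
  forall R, congruence R ->
  forall ts ts' : 'I_n -> tree, (forall i, R (ts i) (ts' i)) -> R (f ts) (f ts').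

End Trees.

(* Main.v *)
Require Import Defs.
From mathcomp Require Import all_boot finmap zify.
Set Implicit Arguments. Unset Strict Implicit. Unset Printing Implicit Defensive.
Local Open Scope fset_scope.

Section Aux.
Variable Sigma : finType.
Notation word := (word Sigma).
Notation tree := (tree Sigma).

Lemma tree_np (t : tree) (w1 w2 : word) : w1 \in tset t -> w2 \in tset t -> w1 != w2 ->
  ~~ prefix w1.1 w2.1.
Proof.
move=> H1 H2 ne.
have /forallP/(_ [` H1])/forallP/(_ [` H2])/implyP := tsetP t; apply => /=; exact ne.
Qed.

Lemma mem_pref b (s : {fset word}) (q : seq bool) (y : Sigma) :
  ((q, y) \in pref b s) = if q is b' :: q' then (b' == b) && ((q', y) \in s) else false.
Proof.
rewrite /pref; case: q => [|b' q].
  by apply/imfsetP => -[w Hw []].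
apply/idP/idP.
  by case/imfsetP => w Hw [-> -> ->]; rewrite eqxx -surjective_pairing.
by case/andP => /eqP -> H; apply/imfsetP; exists (q, y).
Qed.

Lemma mem_star (s t : tree) b q y :
  ((b :: q, y) \in tset (star s t)) = ((q, y) \in tset (if b then t else s)).
Proof. rewrite /= in_fsetU !mem_pref. case: b => /=; [reflexivity | by rewrite orbF]. Qed.

Lemma mem_star0 (s t : tree) y : (([::], y) \in tset (star s t)) = false.
Proof. by rewrite /= in_fsetU !mem_pref. Qed.

Definition Shift (F : word -> word -> Prop) :=
  forall b p x q y, F (b :: p, x) (q, y) <-> exists2 q', q = b :: q' & F (p, x) (q', y).

Definition Hm (F : word -> word -> Prop) (t : tree) (z : word) :=
  exists2 w, w \in tset t & F w z.

Definition RF F (x y : tree) := forall z, Hm F x z <-> Hm F y z.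

Lemma Hm_star F (s t : tree) q y : Shift F ->
  Hm F (star s t) (q, y) <-> exists b, exists q', q = b :: q' /\ Hm F (if b then t else s) (q', y).
Proof.
move=> HF; split.
  case=> [[[|b p] x]]; first by rewrite mem_star0.
  rewrite mem_star => Hw /HF [q' -> Hq']; exists b, q'; split => //; by exists (p, x).
case=> b [q' [-> [[p x] Hw Hf]]]; exists (b :: p, x); first by rewrite mem_star.
by apply/HF; exists q'.
Qed.

Lemma RF_cong F : Shift F -> congruence (RF F).
Proof.
move=> HF; split.
- by move=> t z.
- by move=> t t' H z; split => /H.
- by move=> t t' t'' H1 H2 z; split => [/H1/H2|/H2/H1].
- move=> t1 t2 t1' t2' H1 H2 [q y]; rewrite !Hm_star //.
  split; case=> b [q' [-> H]]; exists b, q'; split => //; case: b H => /=;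
  by [move/H2 | move/H1].
Qed.


Lemma RF_sym F u v : RF F u v -> RF F v u.
Proof. by move=> H z; split => /H. Qed.

Definition rn (x y a : Sigma) := if a == y then x else a.

Lemma rnK x y a : x != y -> rn x y (rn x y a) = rn x y a.
Proof. move=> xy; rewrite /rn; case E: (a == y); by rewrite ?E ?(negbTE xy). Qed.

Lemma rn_neq x y a : x != y -> rn x y a != y.
Proof. rewrite /rn => xy; case E: (a == y) => //; by rewrite E. Qed.

Definition Fren x y (w z : word) : Prop := z = (w.1, rn x y w.2).

Lemma shift_ren x y : Shift (Fren x y).
Proof.
move=> b p a q yy; rewrite /Fren /=; split => [[-> ->]| [q' -> [-> ->]]] //.
by exists p.
Qed.

Definition Fsub c (t0 : {fset word}) (w z : word) : Prop :=
  if w.2 == c then exists2 q', z.1 = w.1 ++ q' & (q', z.2) \in t0 else z = w.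

Lemma shift_sub c t0 : Shift (Fsub c t0).
Proof.
move=> b p a q yy; rewrite /Fsub /=; case: (a == c).
  split => [[q' /= -> H]|[q'' -> [q' /= -> H]]]; first by exists (p ++ q') => //; exists q'.
  by exists q'.
split => [[-> ->]| [q' -> [-> ->]]] //; by exists p.
Qed.

Lemma is_tree_ren (r : Sigma -> Sigma) (t : tree) :
  is_tree [fset (w.1, r w.2) | w in tset t].
Proof.
apply/forallP => -[x Hx]; apply/forallP => -[y Hy] /=; apply/implyP => nxy.
case/imfsetP: Hx nxy => w Hw ->; case/imfsetP: Hy => w' Hw' -> nxy /=.
apply: (tree_np Hw Hw'); apply: contra nxy => /eqP -> //.
Qed.

Definition ren r t : tree := Tree (is_tree_ren r t).

Lemma ren_transfer x y (u v : tree) q z : RF (Fren x y) u v -> z != x -> z != y ->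
  (q, z) \in tset u -> (q, z) \in tset v.
Proof.
move=> H zx zy Hu.
have : Hm (Fren x y) u (q, z) by exists (q, z) => //; rewrite /Fren /rn /= (negbTE zy).
case/H => -[p a] Hw; rewrite /Fren /rn /=; case: eqP => [_ [_ e]| _ [-> ->]] //.
by rewrite e eqxx in zx.
Qed.

Lemma sub_transfer c t0 (u v : tree) q z : RF (Fsub c t0) u v -> z != c ->
  (q, z) \in tset u -> (q, z) \in tset v \/
     exists p q', [/\ (p, c) \in tset v, q = p ++ q' & (q', z) \in t0].
Proof.
move=> H zc Hu.
have : Hm (Fsub c t0) u (q, z) by exists (q, z) => //; rewrite /Fsub /= (negbTE zc).
case/H => -[p a]; rewrite /Fsub /=; case: eqP => [-> Hw [q' /= e H']| _ Hw [-> ->]]; last by left.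
by right; exists p, q'.
Qed.

Lemma fresh (A : {set Sigma}) : #|A| < #|Sigma| -> exists c, c \notin A.
Proof.
move=> H; have : 0 < #|~: A|.
  by move: (cardsC A) => E; rewrite -(ltn_add2l #|A|) addn0 E.
by case/card_gt0P => c; rewrite inE => Hc; exists c.
Qed.

Lemma sep (L : {set Sigma}) (t0 : {fset word}) (u v : tree) :
  2 < #|Sigma| ->
  (forall w, w \in t0 -> w.2 \in L) ->
  (forall x y, x \in L -> y \in L -> x != y -> RF (Fren x y) u v) ->
  (forall c, c \notin L -> RF (Fsub c t0) u v) ->
  u = v.
Proof.
move=> H3 Ht0.
have step1 : forall u v : tree,
  (forall x y, x \in L -> y \in L -> x != y -> RF (Fren x y) u v) ->
  (forall c, c \notin L -> RF (Fsub c t0) u v) ->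
  forall q z, z \notin L -> (q, z) \in tset u -> (q, z) \in tset v.
  move=> u1 v1 Hr Hs q z zL Hu.
  case: (ltnP 1 #|L|) => [/card_gt1P [x [y [xL yL xy]]] | hL].
    by apply: (ren_transfer (Hr x y xL yL xy)) Hu; apply: contraNneq zL => ->.
  have [c] : exists c, c \notin z |: L.
    apply: fresh; rewrite cardsU1 zL add1n; lia.
  rewrite !inE negb_or => /andP[cz cL].
  case: (sub_transfer (Hs c cL) _ Hu) => //; first by rewrite eq_sym.
  by case=> p [q' [_ _ /Ht0 /= zL']]; rewrite zL' in zL.
move=> Hr Hs.
have step2 : forall u v : tree,
  (forall x y, x \in L -> y \in L -> x != y -> RF (Fren x y) u v) ->
  (forall c, c \notin L -> RF (Fsub c t0) u v) ->
  forall q z, (q, z) \in tset u -> (q, z) \in tset v.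
  move=> u1 v1 Hr1 Hs1 q z Hu.
  case: (boolP (z \in L)) => zL; last exact: (step1 u1 v1 Hr1 Hs1).
  case: (ltnP 1 #|L :\ z|) => [/card_gt1P [x [y [xL yL xy]]] | hL].
    move: xL yL; rewrite !in_setD1 => /andP[xz xL] /andP[yz yL].
    by apply: (ren_transfer (Hr1 x y xL yL xy)) Hu; rewrite eq_sym.
  have [c cL] : exists c, c \notin L.
    apply: fresh; rewrite (cardsD1 z L) zL add1n; lia.
  have cz : z != c by apply: contraNneq cL => <-.
  case: (sub_transfer (Hs1 c cL) cz Hu) => // -[p [q' [Hv Eq _]]].
  have Hpu : (p, c) \in tset u1.
    apply: (step1 v1 u1) => //.
      by move=> x y xL yL xy; apply: RF_sym; apply: Hr1.
    by move=> c' c'L; apply: RF_sym; apply: Hs1.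
  rewrite Eq in Hu.
  have : ~~ prefix p (p ++ q').
    by apply: (tree_np Hpu Hu); apply: contra cz => /eqP [_ ->].
  by rewrite prefix_prefix.
apply: val_inj; apply/fsetP => -[q z]; apply/idP/idP; first exact: step2.
apply: step2.
  by move=> x y xL yL xy; apply: RF_sym; apply: Hr.
by move=> c' c'L; apply: RF_sym; apply: Hs.
Qed.

End Aux.

Section Main.
Variable Sigma : finType.
Notation word := (word Sigma).
Notation tree := (tree Sigma).

Definition isL (t : tree) : bool := has (fun w : word => w.1 == [::]) (enum_fset (tset t)).

Definition lets n (ts : 'I_n -> tree) : {set Sigma} :=
  [set x | [exists i, has (fun w : word => w.2 == x) (enum_fset (tset (ts i)))]].

Definition kk n (ts : 'I_n -> tree) := #|[set i | ~~ isL (ts i)]|.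

Lemma letsP n (ts : 'I_n -> tree) x :
  reflect (exists i, exists2 w, w \in tset (ts i) & w.2 = x) (x \in lets ts).
Proof.
rewrite inE; apply: (iffP existsP) => [[i /hasP [w Hw /eqP e]]|[i [w Hw e]]].
  by exists i, w.
by exists i; apply/hasP; exists w => //; apply/eqP.
Qed.

Lemma isL_letter (t : tree) : isL t -> exists a, t = letter a.
Proof.
case/hasP => w Hw /eqP e; exists w.2; apply: val_inj => /=; apply/fsetP => w'.
rewrite in_fset1; apply/idP/eqP => [Hw'| ->].
  case: (eqVneq w w') => [<-|ne]; first by rewrite [w]surjective_pairing e.
  by have := tree_np Hw Hw' ne; rewrite e prefix0s.
by rewrite -e -surjective_pairing.
Qed.

Lemma isL_lettr a : isL (letter a).
Proof. by apply/hasP; exists ([::], a) => //=; rewrite in_fset1. Qed.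

Lemma mem_ren r (t : tree) w :
  (w \in tset (ren r t)) = [exists w0 : tset t, w == ((val w0).1, r (val w0).2)].
Proof.
apply/imfsetP/existsP => [[w0 Hw0 ->]|[[w0 Hw0] /eqP ->]]; last by exists w0.
by exists [` Hw0].
Qed.

Lemma isL_ren r t : isL (ren r t) = isL t.
Proof.
apply/hasP/hasP => [[w]|[w Hw e]].
  rewrite mem_ren => /existsP [[w0 Hw0] /eqP -> /=] e; by exists w0.
exists (w.1, r w.2) => //; rewrite mem_ren; apply/existsP; by exists [` Hw].
Qed.

Variables (n : nat) (f g : ('I_n -> tree) -> tree).
Hypotheses (H3 : 2 < #|Sigma|) (Hf : congruence_preserving f) (Hg : congruence_preserving g)
  (Hfg : forall a : 'I_n -> Sigma, f (fun i => letter (a i)) = g (fun i => letter (a i))).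

Lemma eq_cong : congruence (@eq tree).
Proof. by split => // [t t' t'' -> -> | t1 t2 t1' t2' -> ->]. Qed.

Lemma case_k0 ts : kk ts = 0 -> f ts = g ts.
Proof.
move=> k0.
have hL : forall i, isL (ts i).
  move=> i; apply: contraT => ni.
  suff : 0 < kk ts by rewrite k0.
  by apply/card_gt0P; exists i; rewrite inE.
have [d _] : exists d : Sigma, true.
  have : 0 < #|Sigma| by lia.
  by case/card_gt0P => d _; exists d.
pose a i := odflt d [pick b | ts i == letter b].
have E : forall i, ts i = letter (a i).
  move=> i; rewrite /a; case: pickP => [b /eqP //|].
  by case: (isL_letter (hL i)) => b Eb /(_ b); rewrite Eb eqxx.
have -> : f ts = f (fun i => letter (a i)) by apply: Hf eq_cong _ _ _.
have -> : g ts = g (fun i => letter (a i)) by apply: Hg eq_cong _ _ _.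
exact: Hfg.
Qed.


Definition meas (ts : 'I_n -> tree) := (kk ts * #|Sigma|.+1 + #|lets ts|)%N.

Lemma combine F (ts ts' : 'I_n -> tree) : Shift F -> (forall i, RF F (ts i) (ts' i)) ->
  f ts' = g ts' -> RF F (f ts) (g ts).
Proof.
move=> sh Rt E.
have Ff := Hf (RF_cong sh) Rt; have Gg := Hg (RF_cong sh) Rt.
move=> z; split => h.
  by apply/(Gg z); rewrite -E; apply/(Ff z).
by apply/(Ff z); rewrite E; apply/(Gg z).
Qed.

Lemma main_ind m : forall ts, meas ts <= m -> f ts = g ts.
Proof.
elim: m => [|m IH] ts Hmeas.
  apply: case_k0; move: Hmeas; rewrite /meas leqn0 addn_eq0 muln_eq0.
  by case/andP => /orP [/eqP //|//].
case: (posnP (kk ts)) => [k0|kpos]; first exact: case_k0.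
have [i0 Hi0] : exists i0, ~~ isL (ts i0).
  by case/card_gt0P: kpos => i; rewrite inE => h; exists i.
have IH' : forall ts', meas ts' < meas ts -> f ts' = g ts'.
  by move=> ts' h; apply: IH; lia.
apply: (sep (L := lets ts) (t0 := tset (ts i0)) H3).
- by move=> w Hw; apply/letsP; exists i0, w.
- move=> x y xL yL xy.
  pose ts' := fun i => ren (rn x y) (ts i).
  apply: (combine (ts' := ts') (shift_ren x y)).
    move=> i [q z]; split => [[w Hw ->]|[w]].
      exists (w.1, rn x y w.2); first by rewrite mem_ren; apply/existsP; exists [` Hw].
      by rewrite /Fren /= rnK.
    rewrite mem_ren => /existsP [[w0 Hw0] /eqP ->] ->; exists w0 => //.
    by rewrite /Fren /= rnK.
  apply: IH'; rewrite /meas.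
  have -> : kk ts' = kk ts by rewrite /kk; apply: eq_card => i; rewrite !inE isL_ren.
  suff : #|lets ts'| < #|lets ts| by lia.
  apply: (@leq_ltn_trans #|lets ts :\ y|).
    apply: subset_leq_card; apply/subsetP => a /letsP [i [w]].
    rewrite mem_ren => /existsP [[w0 Hw0] /eqP -> /= <-].
    rewrite in_setD1 rn_neq //= /rn; case: (w0.2 == y) => //.
    by apply/letsP; exists i, w0.
  by rewrite (cardsD1 y (lets ts)) yL.
- move=> c cL.
  pose ts' := fun i => if i == i0 then letter c else ts i.
  have nc : forall z, z \in tset (ts i0) -> z.2 != c.
    by move=> z Hz; apply: contraNneq cL => <-; apply/letsP; exists i0, z.
  apply: (combine (ts' := ts') (shift_sub c (tset (ts i0)))).
    move=> i; rewrite /ts'; case: eqP => [->|_] z; last by [].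
    have key : Hm (Fsub c (tset (ts i0))) (ts i0) z <-> z \in tset (ts i0).
      split => [[w Hw]|Hz]; last by exists z => //; rewrite /Fsub ifN // nc.
      by rewrite /Fsub ifN ?nc // => ->.
    have key2 : Hm (Fsub c (tset (ts i0))) (letter c) z <-> z \in tset (ts i0).
      split => [[w]|Hz].
        rewrite /= in_fset1 => /eqP -> ; rewrite /Fsub /= eqxx => -[q' /= e H].
        by rewrite [z]surjective_pairing e.
      exists ([::], c); first by rewrite /= in_fset1.
      by rewrite /Fsub /= eqxx; exists z.1; rewrite -?surjective_pairing.
    by split => [/key /key2 | /key2 /key].
  apply: IH'; rewrite /meas.
  have h1 : kk ts' < kk ts.
    rewrite /kk (cardsD1 i0 [set i | ~~ isL (ts i)]) inE Hi0 add1n ltnS.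
    apply: subset_leq_card; apply/subsetP => i; rewrite /ts' !inE.
    by case: eqP => [_|/eqP ne]; rewrite ?isL_lettr // ne.
  have h2 : #|lets ts'| <= #|Sigma| by apply: max_card.
  nia.
Qed.

End Main.

Theorem mainTheorem5 (Sigma : finType) (n : nat) (f g : ('I_n -> tree Sigma) -> tree Sigma) :
  2 < #|Sigma| -> 0 < n ->
  congruence_preserving f -> congruence_preserving g ->
  (forall a : 'I_n -> Sigma, f (fun i => letter (a i)) = g (fun i => letter (a i))) ->
  forall ts : 'I_n -> tree Sigma, f ts = g ts.
Proof.
move=> H3 _ Hf Hg Hfg ts.
exact: (main_ind H3 Hf Hg Hfg (leqnn _)).
Qed.
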